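(* Let $G$ be a finite simple graph, $L \subseteq V(G)$, $R = V(G) \setminus L$, and $v \in L$. Let $M_v$ be a matching in $G$ each of whose edges joins a vertex of $N_R(v)$ to a vertex of $T^2_L(v)$. Then $\mathrm{pp}^2_L(v) \geq |N_L(v)| + |M_v|$, and equality holds if $M_v$ is a maximum matching among all such matchings (i.e., a maximum matching of the bipartite graph with sides $N_R(v)$ and $T^2_L(v)$ and all edges of $G$ between them).
   Context: All graphs are finite and simple. For a partition $V(G) = L \cup R$ and a vertex $v$, $N_L(v) = N(v) \cap L$ and $N_R(v) = N(v) \cap R$, and $T^2_L(v) = \{x \in L \setminus (N(v) \cup \{v\}) : N_R(x) \cap N(v) \neq \emptyset\}$, i.e. the vertices of $L$ other than $v$, not adjacent to $v$, reachable from $v$ by a path of length two whose middle vertex lies in $R$. For a vertex $v$ and a set $X \subseteq V(G)$, an $(r,X)$-path packing rooted at $v$ is a family $\mathcal P$ of paths such that: every path has length at least $1$ and at most $r$; every path starts at $v$ and ends at a vertex of $X \setminus \{v\}$; the paths are pairwise vertex-disjoint except for the common start vertex $v$; and no interior vertex of any path lies in $X$. Let $\mathrm{pp}^r_X(v)$ denote the maximum size of an $(r,X)$-path packing rooted at $v$. *)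

(* Defs.v *)
From mathcomp Require Import all_boot all_order.
From mathcomp Require Import boolp.
Set Implicit Arguments. Unset Strict Implicit. Unset Printing Implicit Defensive.

Section Defs.
Variables (T : finType) (e : rel T).

Definition simple_graph : Prop := symmetric e /\ irreflexive e.

Definition nbh (v : T) : {set T} := [set x | e v x].

Definition nbhIn (L : {set T}) (v : T) : {set T} := nbh v :&: L.

Definition T2 (L : {set T}) (v : T) : {set T} :=
  [set x in L | (x != v) && (x \notin nbh v) &&
     [exists y, (y \in ~: L) && (y \in nbh x) && (y \in nbh v)]].

(* A path of length >= 1 starting at v is encoded by the list [p] of its
   vertices after v; the path is v :: p, its length is size p, its end
   vertex is last v p and its interior vertices are take (size p).-1 p. *)
Definition packing_path (r : nat) (X : {set T}) (v : T) (p : seq T) : bool :=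
  [&& 0 < size p, size p <= r, path e v p, uniq (v :: p),
      last v p \in X :\ v &
      all (fun x => x \notin X) (take (size p).-1 p)].

Definition path_packing (r : nat) (X : {set T}) (v : T) (P : seq (seq T)) : bool :=
  all (packing_path r X v) P &&
  pairwise (fun p q => all (fun x => x \notin q) p) P.

(* pp^r_X(v): the maximum size of an (r,X)-path packing rooted at v.
   (Any packing has at most #|T| paths, as the non-empty tails are disjoint.) *)
Definition pp (r : nat) (X : {set T}) (v : T) : nat :=
  \max_(k < #|T|.+1 | `[< exists P, path_packing r X v P /\ size P = k >]) k.

(* A matching each of whose edges joins a vertex of N_R(v) to a vertex of
   T^2_L(v); an edge {a,b} with a ∈ N_R(v), b ∈ T^2_L(v) is stored as (a,b). *)
Definition NR_T2_matching (L : {set T}) (v : T) (M : {set T * T}) : Prop :=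
  (forall a b, (a, b) \in M ->
     [/\ e a b, a \in nbhIn (~: L) v & b \in T2 L v]) /\
  (forall p q, p \in M -> q \in M ->
     (p.1 = q.1 \/ p.1 = q.2 \/ p.2 = q.1 \/ p.2 = q.2) -> p = q).

End Defs.

(* Main.v *)
Require Import Defs.
From mathcomp Require Import all_boot all_order.
From mathcomp Require Import boolp.

Lemma pw_same {T : finType} (P : seq (seq T)) p1 p2 x :
  pairwise (fun p q => all (fun x => x \notin q) p) P ->
  p1 \in P -> p2 \in P -> x \in p1 -> x \in p2 -> p1 = p2.
Proof.
elim: P => //= q s IH /andP[Hall Hpw].
rewrite !inE => /orP[/eqP->|H1] /orP[/eqP->|H2] Hx1 Hx2 //.
- by have := allP (allP Hall p2 H2) x Hx1; rewrite Hx2.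
- by have := allP (allP Hall p1 H1) x Hx2; rewrite Hx1.
- exact: IH.
Qed.

Arguments pw_same {T P p1 p2 x}.

Lemma uniq_pick {T : finType} (g : seq T -> T) (P : seq (seq T)) :
  (forall p, p \in P -> g p \in p) ->
  pairwise (fun p q => all (fun x => x \notin q) p) P -> uniq (map g P).
Proof.
elim: P => [|q s IH] Hg /=; first by [].
case/andP=> Hall Hpw.
have Hg' : forall p, p \in s -> g p \in p.
  by move=> p Hp; apply: Hg; rewrite inE Hp orbT.
rewrite (IH Hg' Hpw) andbT.
apply/mapP => -[p Hp Heq].
have := allP (allP Hall p Hp) (g q) (Hg q (mem_head _ _)).
by rewrite Heq (Hg' p Hp).
Qed.

Lemma pw_of_uniq {A : eqType} (r : rel A) (s : seq A) :
  uniq s -> {in s &, forall p q, p != q -> r p q} -> pairwise r s.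
Proof.
elim: s => //= x s IH /andP[Hx Hu] H.
rewrite IH //; last first.
  by move=> p q Hp Hq; apply: H; rewrite inE ?Hp ?Hq orbT.
rewrite andbT; apply/allP => y Hy; apply: H; rewrite ?inE ?eqxx ?Hy ?orbT //.
by apply: contraNneq Hx => ->.
Qed.

Theorem mainTheorem2 (T : finType) (e : rel T) (L : {set T}) (v : T)
    (M : {set T * T}) :
  simple_graph e -> v \in L -> NR_T2_matching e L v M ->
  #|nbhIn e L v| + #|M| <= pp e 2 L v /\
  ((forall M' : {set T * T}, NR_T2_matching e L v M' -> #|M'| <= #|M|) ->
     pp e 2 L v = #|nbhIn e L v| + #|M|).
Proof.
move=> [esym eirr] vL [Mprop Mmatch].
have lastin : forall p : seq T, 0 < size p -> last v p \in p.
  by case=> [|a s] //= _; exact: mem_last.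
have headin : forall p : seq T, 0 < size p -> head v p \in p.
  by case=> [|a s] //= _; exact: mem_head.
have Hu_last : forall P, path_packing e 2 L v P -> uniq (map (last v) P).
  move=> P /andP[Hall Hpw].
  apply: uniq_pick Hpw => p Hp.
  by apply: lastin; case/andP: (allP Hall p Hp).
have szT : forall P, path_packing e 2 L v P -> size P <= #|T|.
  move=> P HP; have Hu := Hu_last P HP.
  by rewrite -(size_map (last v)) -(card_uniqP Hu) max_card.
have lower : #|nbhIn e L v| + #|M| <= pp e 2 L v.
  set P0 := [seq [:: x] | x <- enum (nbhIn e L v)] ++
            [seq [:: pq.1; pq.2] | pq <- enum M].
  have Hsz : size P0 = #|nbhIn e L v| + #|M|.
    by rewrite size_cat !size_map -!cardE.
  have NP : forall x, x \in enum (nbhIn e L v) -> x \in L /\ e v x.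
    by move=> x; rewrite mem_enum /nbhIn /nbh !inE => /andP[].
  have MP : forall a b, (a, b) \in enum M -> [/\ a \notin L, ~~ e v b & b \in L].
    move=> a b; rewrite mem_enum => Hab; have [_ Ha Hb] := Mprop a b Hab.
    move: Ha Hb; rewrite /nbhIn /T2 /nbh !inE => /andP[_ HaL] /and3P[HbL /andP[_ ?] _].
    by split.
  have HP0 : path_packing e 2 L v P0.
apply/andP; split.
      rewrite all_cat !all_map; apply/andP; split; apply/allP.
        move=> x; rewrite mem_enum /nbhIn /nbh !inE => /andP[Hvx HxL].
        have hxv : x != v by apply: contraTneq Hvx => ->; rewrite eirr.
        by rewrite /packing_path /= !inE Hvx HxL hxv eq_sym hxv.
      move=> [a b]; rewrite mem_enum => Hab.
      have [Hab' Ha Hb] := Mprop a b Hab.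
      move: Ha Hb; rewrite /nbhIn /T2 /nbh !inE => /andP[Hva HaL] /and3P[HbL /andP[Hbv _] _].
      have hab : a != b by apply: contraNneq HaL => ->.
      have hva : v != a by apply: contraNneq HaL => <-.
      by rewrite /packing_path /= !inE Hva Hab' HbL HaL hab Hbv negb_or hva eq_sym Hbv.
    apply: pw_of_uniq.
      rewrite cat_uniq !map_inj_uniq ?enum_uniq //=.
      - rewrite andbT; apply/hasPn => q /mapP[pq _ ->]; apply/mapP => -[x _].
        by move/(congr1 size).
      - by move=> [a b] [c d] /= [-> ->].
      - by move=> x y [].
    move=> p q; rewrite !mem_cat.
    move=> /orP[/mapP[x Hx ->]|/mapP[[a b] Hab ->]] /orP[/mapP[y Hy ->]|/mapP[[c d] Hcd ->]] Hne /=;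
      rewrite ?inE ?andbT.
    + by apply: contra Hne => /eqP->.
    + have [HxL Hvx] := NP x Hx; have [HcL Hvd _] := MP c d Hcd.
      apply/norP; split.
        by apply: contraNneq HcL => <-.
      by apply: contraNneq Hvd => <-.
    + have [HyL Hvy] := NP y Hy; have [HaL Hvb _] := MP a b Hab.
      apply/andP; split.
        by apply: contraNneq HaL => ->.
      by apply: contraNneq Hvb => ->.
    + rewrite !mem_enum in Hab Hcd; rewrite !negb_or; have H := Mmatch (a, b) (c, d) Hab Hcd.
      have Hne' : (a, b) != (c, d) by apply: contra Hne => /eqP[-> ->].
      rewrite -!andbA; apply/and4P; split; apply/eqP => E; move/eqP: Hne'; apply; apply: H => /=.
      * by left.
      * by right; left.
      * by right; right; left.
      * by right; right; right.
  have Hk : size P0 < #|T|.+1 by rewrite ltnS szT.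
  rewrite -Hsz /pp.
  apply: (@leq_bigmax_cond _ (fun k : 'I_#|T|.+1 => `[< exists P, path_packing e 2 L v P /\ size P = k >]) (fun k => nat_of_ord k) (Ordinal Hk)).
  by apply/asboolP; exists P0.
split=> // Hmax.
apply/eqP; rewrite eqn_leq lower andbT.
rewrite /pp; apply/bigmax_leqP => i /asboolP[P [HP <-]].
have Hu := Hu_last P HP.
case/andP: HP => Hall Hpw.
have ne : forall p, p \in P -> 0 < size p.
  by move=> p Hp; case/andP: (allP Hall p Hp).
rewrite -(count_predC (fun p : seq T => last v p \in nbh e v) P).
apply: leq_add.
  rewrite -size_filter -(size_map (last v)) cardE.
  apply: uniq_leq_size.
    apply: subseq_uniq Hu; apply: map_subseq; exact: filter_subseq.
  move=> x /mapP[p]; rewrite mem_filter => /andP[Ha Hp] ->.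
  rewrite mem_enum /nbhIn inE Ha /=.
  by case/and5P: (allP Hall p Hp) => _ _ _ _ /andP[]; rewrite inE => /andP[].
set P2 := filter (predC (fun p : seq T => last v p \in nbh e v)) P.
have HP2 : forall p, p \in P2 -> p \in P by move=> p; rewrite mem_filter => /andP[].
have key : forall p, p \in P2 -> [/\ e (head v p) (last v p),
    head v p \in nbhIn e (~: L) v & last v p \in T2 e L v].
  move=> p Hp2; have Hp := HP2 p Hp2.
  move: Hp2; rewrite mem_filter => /andP[Hna _].
  have := allP Hall p Hp.
  case: p Hna Hp => [|y [|x [|z s]]] //= Hna Hp.
  - by rewrite /nbh inE in Hna; case/and5P => _ _ /andP[H _]; rewrite H in Hna.
  - case/and5P=> _ _ /and3P[Hvy Hyx _] Hun /andP[Hx /andP[HyL _]].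
    rewrite /nbh inE in Hna.
    split=> //.
      by rewrite /nbhIn /nbh !inE Hvy.
    move: Hx; rewrite /= !inE => /andP[Hxv HxL].
    rewrite /T2 ?inE HxL Hxv Hna /=.
    apply/existsP; exists y; rewrite /nbh !inE HyL Hvy andbT /=.
    by rewrite esym.
set f := fun p : seq T => (head v p, last v p).
set M' := [set x in map f P2].
have HuP2 : uniq (map f P2).
  apply: (@map_uniq _ _ snd); rewrite -map_comp.
  apply: subseq_uniq Hu; apply: map_subseq; exact: filter_subseq.
have HM' : NR_T2_matching e L v M'.
  split.
    move=> a b; rewrite inE => /mapP[p Hp [-> ->]]; exact: key.
  move=> p q; rewrite !inE => /mapP[p1 Hp1 ->] /mapP[q1 Hq1 ->] /= H.
  suff -> : p1 = q1 by [].
  have P1 := HP2 p1 Hp1; have Q1 := HP2 q1 Hq1.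
  have hp := headin p1 (ne p1 P1); have lp := lastin p1 (ne p1 P1).
  have hq := headin q1 (ne q1 Q1); have lq := lastin q1 (ne q1 Q1).
  case: H => [|[|[]]] H.
  - by apply: (pw_same Hpw P1 Q1 hp); rewrite H.
  - by apply: (pw_same Hpw P1 Q1 hp); rewrite H.
  - by apply: (pw_same Hpw P1 Q1 lp); rewrite H.
  - by apply: (pw_same Hpw P1 Q1 lp); rewrite H.
have := Hmax M' HM'.
by rewrite /M' cardsE (card_uniqP HuP2) size_map size_filter.
Qed.
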